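(* Let $V:\mathbb{R}\to\mathbb{R}$ be convex with $m:=e^{-V}$ a probability density. Let $0<c<C$ and $f\in\mathcal{P}_{c,C}$. Then there exists a constant $A=A(c,C,V)$ depending only on $c$, $C$ and $V$ such that the optimal transport map $T$ from $m$ to $f$ satisfies $|T(x)-x|\le A$ for all $x\in\mathbb{R}$.
   Context: $\mathcal{P}_{c,C}:=\{g\in\mathcal{P}(\mathbb{R}):\ c\,m\le g\le C\,m\}$. The optimal transport map (for quadratic cost) from $m$ to $f$ on $\mathbb{R}$ is the monotone map $T=F_f^{-1}\circ F_m$, where $F_m,F_f$ are the cumulative distribution functions. *)

(* Defs.v *)
From HB Require Import structures.
From mathcomp Require Import all_boot all_order all_algebra.
From mathcomp Require Import all_classical all_reals all_analysis.
Set Implicit Arguments. Unset Strict Implicit. Unset Printing Implicit Defensive.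
Import Order.TTheory GRing.Theory Num.Theory.
Local Open Scope classical_set_scope.
Local Open Scope ring_scope.

Definition convex_fun (R : realType) (V : R -> R) : Prop :=
  forall (x y t : R), 0 <= t -> t <= 1 ->
    V (t * x + (1 - t) * y) <= t * V x + (1 - t) * V y.

Definition prob_density (R : realType) (g : R -> R) : Prop :=
  measurable_fun setT g /\ (forall x, 0 <= g x) /\
  (\int[@lebesgue_measure R]_x (g x)%:E = 1)%E.

Definition dens_of_pot (R : realType) (V : R -> R) : R -> R :=
  fun x => expR (- V x).

Definition P_cC (R : realType) (c C : R) (m : R -> R) (g : R -> R) : Prop :=
  prob_density g /\ (forall x, c * m x <= g x /\ g x <= C * m x).

Definition cdf (R : realType) (g : R -> R) (x : R) : R :=
  fine (\int[@lebesgue_measure R]_(t in `]-oo, x]) (g t)%:E).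

Definition quantile (R : realType) (F : R -> R) (p : R) : R :=
  inf [set y | p <= F y].

(* Monotone optimal transport map T = F_f^{-1} o F_m from m to f. *)
Definition ot_map (R : realType) (m f : R -> R) (x : R) : R :=
  quantile (cdf f) (cdf m x).

(* Main.v *)
Require Import Defs.
From HB Require Import structures.
From mathcomp Require Import all_boot all_order all_algebra.
From mathcomp Require Import all_classical all_reals all_analysis.
From mathcomp Require Import measurable_realfun.
From mathcomp Require Import ring lra.
Import Order.TTheory GRing.Theory Num.Theory.
Local Open Scope classical_set_scope.
Local Open Scope ring_scope.

Section Convex.
Variables (R : realType) (V : R -> R).
Hypothesis cV : convex_fun V.

Lemma cvx_key p q r : p < q -> q < r ->
  (r - p) * V q <= (r - q) * V p + (q - p) * V r.
Proof.
move=> pq qr.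
have rp : 0 < r - p by lra.
pose t := (r - q) / (r - p).
have t0 : 0 <= t by apply: divr_ge0; lra.
have t1 : t <= 1 by rewrite /t ler_pdivrMr //; lra.
have := cV p r t t0 t1.
have -> : t * p + (1 - t) * r = q.
  rewrite /t; field; lra.
move=> H.
have := ler_wpM2l (ltW rp) H.
have -> : (r - p) * (t * V p + (1 - t) * V r) = (r - q) * V p + (q - p) * V r.
  rewrite /t; field; lra.
by [].
Qed.

Lemma slope_le p q r s : p < q -> r < s -> p <= r -> q <= s ->
  (V q - V p) / (q - p) <= (V s - V r) / (s - r).
Proof.
move=> pq rs pr qs.
have h1 : (V q - V p) / (q - p) <= (V s - V p) / (s - p).
  case: (ltrP q s) => qs'.
  - have := @cvx_key p q s pq qs'.
    move=> K; rewrite ler_pdivrMr; last lra.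
    rewrite mulrAC ler_pdivlMr; last lra.
    nra.
  - have -> : s = q by apply/le_anti; rewrite qs qs'.
    by [].
have h2 : (V s - V p) / (s - p) <= (V s - V r) / (s - r).
  case: (ltrP p r) => pr'.
  - have := @cvx_key p r s pr' rs.
    move=> K; rewrite ler_pdivrMr; last lra.
    rewrite mulrAC ler_pdivlMr; last lra.
    nra.
  - have -> : r = p by apply/le_anti; rewrite pr pr'.
    by [].
exact: le_trans h1 h2.
Qed.

Lemma shift_left x1 u A : 0 < A -> u <= x1 ->
  A * (V x1 - V (x1 + 1)) <= V (u - A) - V u.
Proof.
move=> A0 ux.
have := @slope_le (u - A) u x1 (x1 + 1).
have -> : u - (u - A) = A by ring.
have -> : x1 + 1 - x1 = 1 by ring.
rewrite divr1 => /(_ ltac:(lra) ltac:(lra) ltac:(lra) ltac:(lra)).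
rewrite ler_pdivrMr // => H; nra.
Qed.

Lemma shift_right z u A : 1 <= A -> z <= u ->
  A * (V (z + 1) - V z) <= V (u + A) - V u.
Proof.
move=> A1 zu.
have := @slope_le z (z + 1) u (u + A).
have -> : u + A - u = A by ring.
have -> : z + 1 - z = 1 by ring.
rewrite divr1 => /(_ ltac:(lra) ltac:(lra) ltac:(lra) ltac:(lra)).
rewrite ler_pdivlMr; last lra. nra.
Qed.

Lemma cvx_le_max x y t : x <= t -> t <= y -> V t <= Num.max (V x) (V y).
Proof.
move=> xt ty.
case: (ltrP x y) => xy; last first.
  have -> : t = x by apply/le_anti; rewrite xt (le_trans ty xy).
  by rewrite le_max lexx.
pose s := (y - t) / (y - x).
have s0 : 0 <= s by apply: divr_ge0; lra.
have s1 : s <= 1 by rewrite /s ler_pdivrMr //; lra.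
have := cV x y s s0 s1.
have -> : s * x + (1 - s) * y = t by rewrite /s; field; lra.
move=> H; apply: (le_trans H).
have hx : V x <= Num.max (V x) (V y) by rewrite le_max lexx.
have hy : V y <= Num.max (V x) (V y) by rewrite le_max lexx orbT.
nra.
Qed.

End Convex.

Section Meas.
Variable (R : realType).
Local Notation mu := (@lebesgue_measure R).

Lemma pd_meas {g : R -> R} : prob_density g -> forall {D}, measurable D ->
  measurable_fun D (fun x => (g x)%:E).
Proof.
move=> [mg _] D mD; apply/measurable_EFinP.
exact: measurable_funS mg.
Qed.

Lemma pd_le1 {g : R -> R} : prob_density g -> forall {D}, measurable D ->
  (0 <= \int[mu]_(x in D) (g x)%:E <= 1)%E.
Proof.
move=> pg D mD; have [mg [g0 g1]] := pg.
rewrite integral_ge0 /=; last by move=> x _; rewrite lee_fin.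
rewrite -g1; apply: ge0_subset_integral => //.
- exact: pd_meas.
- by move=> x _; rewrite lee_fin.
Qed.

Lemma pd_finE {g : R -> R} : prob_density g -> forall {D}, measurable D ->
  ((fine (\int[mu]_(x in D) (g x)%:E))%:E = \int[mu]_(x in D) (g x)%:E)%E.
Proof.
move=> pg D mD; have /andP[h0 h1] := pd_le1 pg mD.
apply: fineK; rewrite ge0_fin_numE //; exact: le_lt_trans h1 (ltry _).
Qed.

Lemma cdfE {g : R -> R} : prob_density g -> forall x,
  ((Defs.cdf g x)%:E = \int[mu]_(t in `]-oo, x]) (g t)%:E)%E.
Proof. by move=> pg x; rewrite /cdf pd_finE. Qed.

Lemma cdf_01 {g : R -> R} : prob_density g -> forall x,
  0 <= Defs.cdf g x <= 1.
Proof. by move=> pg x; rewrite -!lee_fin cdfE //; exact: pd_le1. Qed.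

Lemma tailE {g : R -> R} : prob_density g -> forall x,
  (\int[mu]_(t in `]x, +oo[) (g t)%:E = (1 - Defs.cdf g x)%:E)%E.
Proof.
move=> pg x; have [mg [g0 g1]] := pg.
have := g1.
rewrite -(itv_setU_setT false x) ge0_integral_setU //; last 3 first.
- by apply: pd_meas => //; apply: measurableU.
- by move=> t _; rewrite lee_fin.
- rewrite disj_set2E; apply/eqP; rewrite -subset0 => t [] /=; rewrite !in_itv /= andbT => h1 h2.
  by have := lt_le_trans h2 h1; rewrite ltxx.
rewrite -cdfE // -pd_finE // => /(congr1 fine) /= h.
rewrite -pd_finE //; congr EFin; lra.
Qed.

End Meas.

Section Shift.
Variable (R : realType).
Local Notation mu := (@lebesgue_measure R).

Lemma lebesgue_measure_shift (h : R) (A : set R) : measurable A ->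
  pushforward mu ((fun x => x + h) : _ -> measurableTypeR R) A = mu A.
Proof.
move=> mA; apply/esym/lebesgue_measure_unique => //.
  by apply: measurable_funD => //; exact: measurable_cst.
move=> mh _ [[a b]] _ <-.
rewrite [RHS](_ : _ = mu `](a - h), (b - h)]%classic); last first.
  rewrite /= /pushforward; congr (mu _).
  apply/seteqP; split => t /=; rewrite !in_itv /= => /andP[h1 h2];
    apply/andP; split; lra.
rewrite !lebesgue_measure_itv/= !lte_fin.
have -> : (a - h < b - h) = (a < b) by apply/idP/idP => H; lra.
by case: ifP => // _; rewrite -EFinD; congr EFin; ring.
Qed.

Lemma int_shift (g : R -> R) (h : R) (D : set R) :
  measurable_fun setT g -> (forall x, 0 <= g x) -> measurable D ->
  (\int[mu]_(y in D) (g y)%:E =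
   \int[mu]_(x in (+%R^~ h) @^-1` D) (g (x + h)%R)%:E)%E.
Proof.
move=> mg g0 mD.
have mh : measurable_fun setT (+%R^~ h : R -> measurableTypeR R).
  by apply: measurable_funD => //; exact: measurable_cst.
transitivity (\int[pushforward mu (+%R^~ h : R -> measurableTypeR R)]_(y in D) (g y)%:E)%E.
  apply: eq_measure_integral => A mA _; exact/esym/lebesgue_measure_shift.
rewrite ge0_integral_pushforward //.
- apply/measurable_EFinP; exact: measurable_funS mg.
- by move=> y _; rewrite lee_fin.
Qed.

Lemma int_shift_left (g : R -> R) (A x : R) :
  measurable_fun setT g -> (forall x, 0 <= g x) ->
  (\int[mu]_(y in `]-oo, (x - A)%R]) (g y)%:E =
   \int[mu]_(u in `]-oo, x]) (g (u - A)%R)%:E)%E.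
Proof.
move=> mg g0; rewrite (@int_shift g (- A)) //.
congr (integral _ _ _).
apply/seteqP; split => t /=; rewrite !in_itv /= => h1; lra.
Qed.

Lemma int_shift_right (g : R -> R) (A x : R) :
  measurable_fun setT g -> (forall x, 0 <= g x) ->
  (\int[mu]_(y in `](x + A)%R, +oo[) (g y)%:E =
   \int[mu]_(u in `]x, +oo[) (g (u + A)%R)%:E)%E.
Proof.
move=> mg g0; rewrite (@int_shift g A) //.
congr (integral _ _ _).
apply/seteqP; split => t /=; rewrite !in_itv /= !andbT => h1; lra.
Qed.

End Shift.
Section Gen.
Variable (R : realType).
Local Notation mu := (@lebesgue_measure R).

Lemma int_scale (g h : R -> R) (k : R) (D : set R) : measurable D ->
  measurable_fun setT g -> measurable_fun setT h ->
  (forall x, 0 <= g x) -> (forall x, 0 <= h x) -> 0 <= k ->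
  (forall x, D x -> g x <= k * h x) ->
  (\int[mu]_(x in D) (g x)%:E <= k%:E * \int[mu]_(x in D) (h x)%:E)%E.
Proof.
move=> mD mg mh g0 h0 k0 H.
have mh' : measurable_fun D (fun x => (h x)%:E).
  by apply/measurable_EFinP; exact: measurable_funS mh.
rewrite -ge0_integralZl //; last by move=> x _; rewrite lee_fin.
apply: ge0_le_integral => //.
- by move=> x _; rewrite lee_fin.
- by apply/measurable_EFinP; exact: measurable_funS mg.
- by apply: emeasurable_funM => //; exact: measurable_cst.
Qed.

Lemma int_scale_lo (g h : R -> R) (k : R) (D : set R) : measurable D ->
  measurable_fun setT g -> measurable_fun setT h ->
  (forall x, 0 <= g x) -> (forall x, 0 <= h x) -> 0 <= k ->
  (forall x, D x -> k * h x <= g x) ->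
  (k%:E * \int[mu]_(x in D) (h x)%:E <= \int[mu]_(x in D) (g x)%:E)%E.
Proof.
move=> mD mg mh g0 h0 k0 H.
have mh' : measurable_fun D (fun x => (h x)%:E).
  by apply/measurable_EFinP; exact: measurable_funS mh.
rewrite -ge0_integralZl //; last by move=> x _; rewrite lee_fin.
apply: ge0_le_integral => //.
- by move=> x _; rewrite -EFinM lee_fin; apply: mulr_ge0.
- by apply: emeasurable_funM => //; exact: measurable_cst.
- by apply/measurable_EFinP; exact: measurable_funS mg.
Qed.

Lemma int_lb (g : R -> R) (k : R) (D : set R) : measurable D ->
  measurable_fun setT g -> 0 <= k -> (forall x, D x -> k <= g x) ->
  (k%:E * mu D <= \int[mu]_(x in D) (g x)%:E)%E.
Proof.
move=> mD mg k0 H.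
rewrite -(@integral_cst _ _ _ mu D mD k%:E).
apply: ge0_le_integral => //.
- by apply/measurable_EFinP; exact: measurable_funS mg.
Qed.

Lemma cdf_mono (g : R -> R) : prob_density g -> forall x y, y <= x ->
  Defs.cdf g y <= Defs.cdf g x.
Proof.
move=> pg x y yx; rewrite -lee_fin !cdfE //.
have [mg [g0 _]] := pg.
apply: ge0_subset_integral => //.
- by apply/measurable_EFinP; exact: measurable_funS mg.
- by move=> t _; rewrite lee_fin.
- by move=> t /=; rewrite !in_itv /= => h; exact: le_trans h yx.
Qed.

End Gen.

Section Dens.
Variables (R : realType) (V : R -> R).
Hypothesis cV : convex_fun V.
Hypothesis pm : prob_density (dens_of_pot V).
Local Notation mu := (@lebesgue_measure R).
Local Notation m := (dens_of_pot V).

Lemma m_meas : measurable_fun setT m.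
Proof. by case: pm. Qed.

Lemma m_ge0 x : 0 <= m x.
Proof. by rewrite /m /dens_of_pot expR_ge0. Qed.

Lemma cdf_pos x : 0 < Defs.cdf m x.
Proof.
pose k := expR (- Num.max (V (x - 1)) (V x)).
have h : (0 < k%:E * mu `[(x - 1)%R, x])%E.
  rewrite lebesgue_measure_itv /= lte_fin.
  have -> : (x - 1 < x) = true by apply/idP; lra.
  rewrite -EFinD -EFinM lte_fin; apply: mulr_gt0; first exact: expR_gt0.
  lra.
rewrite -lte_fin cdfE //; apply: (lt_le_trans h).
apply: (@le_trans _ _ (\int[mu]_(t in `[(x - 1)%R, x]) (m t)%:E)%E).
  apply: int_lb => //.
  - exact: m_meas.
  - exact: expR_ge0.
  - move=> t /=; rewrite in_itv /= => /andP[h1 h2].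
    rewrite /m /dens_of_pot ler_expR lerN2.
    exact: cvx_le_max.
- apply: ge0_subset_integral => //.
  + by apply/measurable_EFinP; exact: measurable_funS m_meas.
  + by move=> t _; rewrite lee_fin m_ge0.
  + by move=> t /=; rewrite !in_itv /= => /andP[].
Qed.

Lemma tail_pos x : 0 < 1 - Defs.cdf m x.
Proof.
pose k := expR (- Num.max (V x) (V (x + 1))).
have h : (0 < k%:E * mu `]x, (x + 1)%R])%E.
  rewrite lebesgue_measure_itv /= lte_fin.
  have -> : (x < x + 1) = true by apply/idP; lra.
  rewrite -EFinD -EFinM lte_fin; apply: mulr_gt0; first exact: expR_gt0.
  lra.
rewrite -lte_fin -tailE //; apply: (lt_le_trans h).
apply: (@le_trans _ _ (\int[mu]_(t in `]x, (x + 1)%R]) (m t)%:E)%E).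
  apply: int_lb => //.
  - exact: m_meas.
  - exact: expR_ge0.
  - move=> t /=; rewrite in_itv /= => /andP[h1 h2].
    rewrite /m /dens_of_pot ler_expR lerN2.
    apply: cvx_le_max => //; exact: ltW.
- apply: ge0_subset_integral => //.
  + by apply/measurable_EFinP; exact: measurable_funS m_meas.
  + by move=> t _; rewrite lee_fin m_ge0.
  + by move=> t /=; rewrite !in_itv /= andbT => /andP[].
Qed.

End Dens.

Section Dens2.
Variables (R : realType) (V : R -> R).
Hypothesis cV : convex_fun V.
Hypothesis pm : prob_density (dens_of_pot V).
Local Notation mu := (@lebesgue_measure R).
Local Notation m := (dens_of_pot V).

Lemma ex_left : exists x1, V (x1 + 1) < V x1.
Proof.
case: (pselect (exists x1, V (x1 + 1) < V x1)) => // H; exfalso.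
have Hm : forall x, V x <= V (x + 1).
  by move=> x; rewrite leNgt; apply/negP => h; apply: H; exists x.
have mono : forall t, t <= 0 -> V t <= V 0.
  move=> t; rewrite le_eqVlt => /predU1P[-> //|t0].
  have := @slope_le R V cV (t - 1) t t 0.
  have -> : t - (t - 1) = 1 by ring.
  rewrite divr1 => /(_ ltac:(lra) ltac:(lra) ltac:(lra) ltac:(lra)) h.
  have := Hm (t - 1); rewrite (_ : t - 1 + 1 = t); last ring.
  move=> h2.
  move: h; rewrite ler_pdivlMr; last lra.
  nra.
have := @pd_le1 R _ pm _ (measurable_itv `]-oo, 0%R]).
move=> /andP[_ h1].
have : ((m 0)%:E * mu `]-oo, 0%R] <= \int[mu]_(x in `]-oo, 0%R]) (m x)%:E)%E.
  apply: int_lb => //.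
  - exact: m_meas.
  - exact: m_ge0.
  - move=> t /=; rewrite in_itv /= => h.
    rewrite /m /dens_of_pot ler_expR lerN2; exact: mono.
rewrite lebesgue_measure_itv /= ltNyr /= mulry gtr0_sg ?mul1e; last exact: expR_gt0.
move=> h2; have := le_trans h2 h1; by rewrite leye_eq.
Qed.

Lemma ex_right : exists z, V z < V (z + 1).
Proof.
case: (pselect (exists z, V z < V (z + 1))) => // H; exfalso.
have Hm : forall x, V (x + 1) <= V x.
  by move=> x; rewrite leNgt; apply/negP => h; apply: H; exists x.
have mono : forall t, 0 <= t -> V t <= V 0.
  move=> t; rewrite le_eqVlt => /predU1P[<- //|t0].
  have := @slope_le R V cV 0 t t (t + 1).
  have -> : t + 1 - t = 1 by ring.
  rewrite divr1 => /(_ ltac:(lra) ltac:(lra) ltac:(lra) ltac:(lra)) h.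
  have := Hm t => h2.
  move: h; rewrite ler_pdivrMr; last lra.
  nra.
have := @pd_le1 R _ pm _ (measurable_itv `[0%R, +oo[).
move=> /andP[_ h1].
have : ((m 0)%:E * mu `[0%R, +oo[ <= \int[mu]_(x in `[0%R, +oo[) (m x)%:E)%E.
  apply: int_lb => //.
  - exact: m_meas.
  - exact: m_ge0.
  - move=> t /=; rewrite in_itv /= andbT => h.
    rewrite /m /dens_of_pot ler_expR lerN2; exact: mono.
rewrite lebesgue_measure_itv /= ltry /= mulry gtr0_sg ?mul1e; last exact: expR_gt0.
move=> h2; have := le_trans h2 h1; by rewrite leye_eq.
Qed.

End Dens2.

Section Dens3.
Variables (R : realType) (V : R -> R).
Hypothesis cV : convex_fun V.
Hypothesis pm : prob_density (dens_of_pot V).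
Local Notation mu := (@lebesgue_measure R).
Local Notation m := (dens_of_pot V).

Lemma F_shift x1 A x : 0 < A -> x <= x1 ->
  Defs.cdf m (x - A) <= expR (- (A * (V x1 - V (x1 + 1)))) * Defs.cdf m x.
Proof.
move=> A0 xx1.
have mm := @m_meas R V pm.
rewrite -lee_fin EFinM !cdfE // int_shift_left //; last exact: m_ge0.
apply: int_scale => //.
- apply: measurableT_comp => //.
  by apply: measurable_funD => //; exact: measurable_cst.
- by move=> u; exact: m_ge0.
- exact: m_ge0.
- move=> u /=; rewrite in_itv /= => ux.
  rewrite /m /dens_of_pot -expRD ler_expR.
  have := @shift_left R V cV x1 u A A0 (le_trans ux xx1); lra.
Qed.

Lemma G_shift z A x : 1 <= A -> z <= x ->
  1 - Defs.cdf m (x + A) <= expR (- (A * (V (z + 1) - V z))) * (1 - Defs.cdf m x).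
Proof.
move=> A1 zx.
have mm := @m_meas R V pm.
rewrite -lee_fin EFinM -!tailE // int_shift_right //; last exact: m_ge0.
apply: int_scale => //.
- apply: measurableT_comp => //.
  by apply: measurable_funD => //; exact: measurable_cst.
- by move=> u; exact: m_ge0.
- exact: m_ge0.
- move=> u /=; rewrite in_itv /= andbT => ux.
  rewrite /m /dens_of_pot -expRD ler_expR.
  have := @shift_right R V cV z u A A1 (le_trans zx (ltW ux)); lra.
Qed.

Variables (c C : R) (f : R -> R).
Hypothesis c0 : 0 < c.
Hypothesis cC : c < C.
Hypothesis pf : P_cC c C m f.

Let pdf : prob_density f. Proof. by case: pf. Qed.
Let fmeas : measurable_fun setT f. Proof. by case: pdf. Qed.
Let f0 x : 0 <= f x. Proof. by case: pdf => _ []. Qed.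
Let flo x : c * m x <= f x. Proof. by case: pf => _ /(_ x) []. Qed.
Let fup x : f x <= C * m x. Proof. by case: pf => _ /(_ x) []. Qed.

Lemma cmp_cdf_up y : Defs.cdf f y <= C * Defs.cdf m y.
Proof.
rewrite -lee_fin EFinM !cdfE //.
apply: int_scale => //; by [exact: (@m_meas R V pm) | exact: m_ge0 | exact: (le_trans (ltW c0) (ltW cC)) | exact: ltW c0].
Qed.

Lemma cmp_cdf_lo y : c * Defs.cdf m y <= Defs.cdf f y.
Proof.
rewrite -lee_fin EFinM !cdfE //.
apply: int_scale_lo => //; by [exact: (@m_meas R V pm) | exact: m_ge0 | exact: (le_trans (ltW c0) (ltW cC)) | exact: ltW c0].
Qed.

Lemma cmp_tail_up y : 1 - Defs.cdf f y <= C * (1 - Defs.cdf m y).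
Proof.
rewrite -lee_fin EFinM -!tailE //.
apply: int_scale => //; by [exact: (@m_meas R V pm) | exact: m_ge0 | exact: (le_trans (ltW c0) (ltW cC)) | exact: ltW c0].
Qed.

Lemma cmp_tail_lo y : c * (1 - Defs.cdf m y) <= 1 - Defs.cdf f y.
Proof.
rewrite -lee_fin EFinM -!tailE //.
apply: int_scale_lo => //; by [exact: (@m_meas R V pm) | exact: m_ge0 | exact: (le_trans (ltW c0) (ltW cC)) | exact: ltW c0].
Qed.

End Dens3.

Local Close Scope classical_set_scope.

Theorem lemma2p7 (R : realType) (V : R -> R) (c C : R) :
  convex_fun V -> prob_density (dens_of_pot V) -> 0 < c -> c < C ->
  exists A : R, forall f : R -> R, P_cC c C (dens_of_pot V) f ->
    forall x : R, `|ot_map (dens_of_pot V) f x - x| <= A.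
Proof.
move=> cV pm c0 cC.
have [x1 hx1] := @ex_left R V cV pm.
have [z hz] := @ex_right R V cV pm.
set a := V x1 - V (x1 + 1).
set b := V (z + 1) - V z.
have a0 : 0 < a by rewrite /a; lra.
have b0 : 0 < b by rewrite /b; lra.
have C0 : 0 < C by lra.
set d := Num.min (c / 2) (1 / (2 * C)).
have d0 : 0 < d.
  rewrite /d lt_min; apply/andP; split; apply: divr_gt0 => //; lra.
have dc : d <= c / 2 by rewrite /d ge_min lexx.
have dC : d <= 1 / (2 * C) by rewrite /d ge_min lexx orbT.
have dC' : C * d <= 1 / 2.
  move: dC; rewrite ler_pdivlMr; last lra.
  move=> h; nra.
set A := Num.max 1 (Num.max (- ln d / a) (- ln d / b)).
have A1 : 1 <= A by rewrite /A le_max lexx.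
have A0 : 0 < A by lra.
have Aa : - ln d <= A * a.
  have : - ln d / a <= A by rewrite /A !le_max lexx !orbT.
  by rewrite ler_pdivrMr // mulrC.
have Ab : - ln d <= A * b.
  have : - ln d / b <= A by rewrite /A !le_max lexx !orbT.
  by rewrite ler_pdivrMr // mulrC.
set qA := expR (- (A * a)).
set qB := expR (- (A * b)).
have qa : qA <= d.
  rewrite /qA /qB -[X in _ <= X](@lnK _ d); last by rewrite posrE.
  by rewrite ler_expR; lra.
have qb : qB <= d.
  rewrite /qA /qB -[X in _ <= X](@lnK _ d); last by rewrite posrE.
  by rewrite ler_expR; lra.
have qA0 : 0 <= qA by exact: expR_ge0.
have qB0 : 0 <= qB by exact: expR_ge0.
set F := Defs.cdf (dens_of_pot V).
have Fpos : forall x, 0 < F x := @cdf_pos R V cV pm.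
have Gpos : forall x, 0 < 1 - F x := @tail_pos R V cV pm.
have Fmono : forall x y, y <= x -> F y <= F x := @cdf_mono R _ pm.
have FS : forall x, x <= x1 -> F (x - A) <= qA * F x.
  by move=> x hx; exact: (@F_shift R V cV pm x1 A x A0 hx).
have GS : forall x, z <= x -> 1 - F (x + A) <= qB * (1 - F x).
  by move=> x hx; exact: (@G_shift R V cV pm z A x A1 hx).
set B := A + `|z + 2 * A - x1|.
have B1 : z + 2 * A - x1 <= `|z + 2 * A - x1| := ler_norm _.
have Bn : 0 <= `|z + 2 * A - x1| := normr_ge0 _.
have BA : A <= B by rewrite /B; lra.
have BB : z + 2 * A - x1 <= B - A by rewrite /B; lra.
clearbody B.
exists B => f pf x.
set Ff := Defs.cdf f.
have Fup : forall y, Ff y <= C * F y by move=> y; apply: (@cmp_cdf_up R V pm c C f).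
have Flo : forall y, c * F y <= Ff y by move=> y; apply: (@cmp_cdf_lo R V pm c C f).
have Gup : forall y, 1 - Ff y <= C * (1 - F y) by move=> y; apply: (@cmp_tail_up R V pm c C f).
have Glo : forall y, c * (1 - F y) <= 1 - Ff y by move=> y; apply: (@cmp_tail_lo R V pm c C f).
set S := [set y : R | F x <= Ff y]%classic.
have -> : ot_map (dens_of_pot V) f x = inf S by [].
have lbS : lbound S (x - B).
  move=> y; rewrite /S /= => hy.
  rewrite leNgt; apply/negP => yB.
  case: (lerP x x1) => hxx1.
    have h1 := FS x hxx1.
    have h2 : F y <= F (x - A) by apply: Fmono; lra.
    have h3 := Fup y.
    have h4 := Fpos x.
    have h5 : C * F y <= C * (qA * F x) by apply: ler_wpM2l; lra.
    have h6 : C * (qA * F x) <= (C * d) * F x.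
      rewrite mulrA; apply: ler_wpM2r; first lra.
      by apply: ler_wpM2l; lra.
    have h7 : (C * d) * F x <= 1 / 2 * F x by apply: ler_wpM2r; lra.
    lra.
  case: (lerP x (z + A)) => hxz.
    have h1 := FS x1 (lexx _).
    have h2 : F y <= F (x1 - A) by apply: Fmono; lra.
    have h3 := Fup y.
    have h4 := Fpos x1.
    have h4' : F x1 <= F x by apply: Fmono; lra.
    have h5 : C * F y <= C * (qA * F x1) by apply: ler_wpM2l; lra.
    have h6 : C * (qA * F x1) <= (C * d) * F x1.
      rewrite mulrA; apply: ler_wpM2r; first lra.
      by apply: ler_wpM2l; lra.
    have h7 : (C * d) * F x1 <= 1 / 2 * F x1 by apply: ler_wpM2r; lra.
    lra.
  have h1 : 1 - F (x - A + A) <= qB * (1 - F (x - A)) by apply: GS; lra.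
  rewrite (_ : x - A + A = x) in h1; last ring.
  have h2 : F y <= F (x - A) by apply: Fmono; lra.
  have h3 := Glo y.
  have h4 := Gpos (x - A).
  have h5 : c * (1 - F (x - A)) <= c * (1 - F y) by apply: ler_wpM2l; lra.
  have h6 : qB * (1 - F (x - A)) <= c / 2 * (1 - F (x - A)).
    by apply: ler_wpM2r; lra.
  have h7 : 0 < c * (1 - F (x - A)) by apply: mulr_gt0.
  lra.
have [y0 [Sy0 y0B]] : exists y0, S y0 /\ y0 <= x + B.
  case: (lerP x (x1 - A)) => hx.
    exists (x + A); split; last by lra.
    rewrite /S /=.
    have h1 : F (x + A - A) <= qA * F (x + A) by apply: FS; lra.
    rewrite (_ : x + A - A = x) in h1; last ring.
    have h2 := Flo (x + A).
    have h3 := Fpos (x + A).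
    have h4 : qA * F (x + A) <= c * F (x + A) by apply: ler_wpM2r; lra.
    lra.
  case: (lerP x z) => hxz.
    exists (z + A); split; last by lra.
    rewrite /S /=.
    have h1 := GS z (lexx _).
    have h2 := Gup (z + A).
    have h3 := Gpos z.
    have h4 : F x <= F z by exact: Fmono.
    have h5 : C * (1 - F (z + A)) <= C * (qB * (1 - F z)) by apply: ler_wpM2l; lra.
    have h6 : C * (qB * (1 - F z)) <= (C * d) * (1 - F z).
      rewrite mulrA; apply: ler_wpM2r; first lra.
      by apply: ler_wpM2l; lra.
    have h7 : (C * d) * (1 - F z) <= 1 / 2 * (1 - F z) by apply: ler_wpM2r; lra.
    lra.
  exists (x + A); split; last by lra.
  rewrite /S /=.
  have h1 := GS x (ltW hxz).
  have h2 := Gup (x + A).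
  have h3 := Gpos x.
  have h5 : C * (1 - F (x + A)) <= C * (qB * (1 - F x)) by apply: ler_wpM2l; lra.
  have h6 : C * (qB * (1 - F x)) <= (C * d) * (1 - F x).
    rewrite mulrA; apply: ler_wpM2r; first lra.
    by apply: ler_wpM2l; lra.
  have h7 : (C * d) * (1 - F x) <= 1 / 2 * (1 - F x) by apply: ler_wpM2r; lra.
  lra.
have h1 : x - B <= inf S by apply: lb_le_inf => //; exists y0.
have h2 : inf S <= y0.
  by apply: ge_inf => //; exists (x - B).
rewrite ler_norml; apply/andP; split; lra.
Qed.
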